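(* Let $w\in\mathcal T$ be a word of length $\ell$ and let $p_x,p_y$ be Gaussian integers with $\max\{\|p_x\|,\|p_y\|\}>\ell$. Then $I_{p_x,p_y}(w)$ is trivial.
   Context: For a Gaussian integer $p$, $\|p\|=\max\{|\mathrm{Re}\,p|,|\mathrm{Im}\,p|\}$. Let $F_2^{(a)},F_2^{(b)},F_2^{(c)}$ be free groups on $a_1,a_2$; $b_1,b_2$; $c_1,c_2$, let $\psi\colon F_2^{(a)}\times F_2^{(b)}\times F_2^{(c)}\to\mathbb Z^2$ send $a_i,b_i,c_i\mapsto e_i$, and $K=\ker\psi$, generated by $x_i=a_ic_i^{-1}$, $y_i=b_ic_i^{-1}$. $\mathcal T\subseteq F(x_1,x_2,y_1,y_2)$ is the set of elements representing the identity of $K$. $\mathrm{Conf}_2(X)=\{(z_1,z_2)\in X^2:z_1\ne z_2\}$. For Gaussian integers $p_x,p_y$ put $\hat p_x=p_x-(\tfrac13+\tfrac13 i)$, $\hat p_y=p_y+(\tfrac13+\tfrac13i)$. For $w\in\mathcal T$ given by a word of length $\ell$, define $\gamma_x,\gamma_y\colon[0,1]\to\mathbb C$ with $\gamma_x(0)=\hat p_x$, $\gamma_y(0)=\hat p_y$, linear on each $[(k-1)/\ell,k/\ell]$: if the $k$-th letter is $x_1^\delta$ (resp. $x_2^\delta$), $\delta=\pm1$, $\gamma_x$ moves by $\delta$ (resp. $i\delta$) and $\gamma_y$ is constant; if it is $y_1^\delta$ (resp. $y_2^\delta$), $\gamma_y$ moves by $-\delta$ (resp. $-i\delta$) and $\gamma_x$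 is constant. $(\gamma_x,\gamma_y)$ is a loop in $\mathrm{Conf}_2(\mathbb C\setminus\{0\})$ based at $(\hat p_x,\hat p_y)$, and $I_{p_x,p_y}(w)$ is its class in $\pi_1(\mathrm{Conf}_2(\mathbb C\setminus\{0\}),(\hat p_x,\hat p_y))$ (independent of the word chosen for $w$). *)

(* Defs.v *)
From HB Require Import structures.
From mathcomp Require Import all_boot all_order all_algebra.
From mathcomp Require Import all_classical all_reals all_analysis.
Set Implicit Arguments. Unset Strict Implicit. Unset Printing Implicit Defensive.
Import Order.TTheory GRing.Theory Num.Theory.
Import numFieldTopology.Exports numFieldNormedType.Exports.
Local Open Scope ring_scope.
Local Open Scope classical_set_scope.

(* A word in a free group on generators indexed by nat: a letter is (i, δ),
   δ = true meaning exponent +1, δ = false meaning exponent -1. *)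
Definition fletter := (nat * bool)%type.

Definition fpush (l : fletter) (s : seq fletter) : seq fletter :=
  match s with
  | l' :: s' => if (l'.1 == l.1) && (l'.2 == ~~ l.2) then s' else l :: s
  | [::] => [:: l]
  end.

Definition freduce (w : seq fletter) : seq fletter := foldr fpush [::] w.

Definition ftrivial (w : seq fletter) : Prop := freduce w = [::].

Inductive gen := gx1 | gx2 | gy1 | gy2.
Definition gen_eqb (a b : gen) : bool :=
  match a, b with
  | gx1, gx1 | gx2, gx2 | gy1, gy1 | gy2, gy2 => true | _, _ => false end.

Definition kword := seq (gen * bool)%type.

(* the three components of psi-restricted map F(x,y) -> F^(a) x F^(b) x F^(c),
   x_i |-> a_i c_i^-1, y_i |-> b_i c_i^-1 *)
Definition comp_a (g : gen * bool) : seq fletter :=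
  match g.1 with gx1 => [:: (1%N, g.2)] | gx2 => [:: (2%N, g.2)] | _ => [::] end.
Definition comp_b (g : gen * bool) : seq fletter :=
  match g.1 with gy1 => [:: (1%N, g.2)] | gy2 => [:: (2%N, g.2)] | _ => [::] end.
Definition comp_c (g : gen * bool) : seq fletter :=
  match g.1 with
  | gx1 | gy1 => [:: (1%N, ~~ g.2)] | gx2 | gy2 => [:: (2%N, ~~ g.2)] end.

(* w ∈ 𝒯 : the word represents the identity of K ⊆ F^(a) x F^(b) x F^(c) *)
Definition inT (w : kword) : Prop :=
  [/\ ftrivial (flatten (map comp_a w)),
      ftrivial (flatten (map comp_b w)) &
      ftrivial (flatten (map comp_c w))].

Definition gauss := (int * int)%type.
Definition gauss_norm (p : gauss) : nat := maxn `|p.1|%N `|p.2|%N.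

Section Loop.
Variable R : realType.

(* complex numbers modelled as R * R (real part, imaginary part) *)
Local Notation cplx := (R * R)%type.

Definition clamp01 (u : R) : R := Num.min 1 (Num.max 0 u).

Definition sgn (b : bool) : R := if b then 1 else -1.

Definition step_x (g : gen * bool) : cplx :=
  match g.1 with
  | gx1 => (sgn g.2, 0) | gx2 => (0, sgn g.2) | _ => (0, 0) end.
Definition step_y (g : gen * bool) : cplx :=
  match g.1 with
  | gy1 => (- sgn g.2, 0) | gy2 => (0, - sgn g.2) | _ => (0, 0) end.

Definition hat_x (p : gauss) : cplx := (p.1%:~R - 3^-1, p.2%:~R - 3^-1).
Definition hat_y (p : gauss) : cplx := (p.1%:~R + 3^-1, p.2%:~R + 3^-1).

(* The piecewise linear path starting at z0: on [(k-1)/l, k/l] it moves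
   linearly by the displacement of the k-th letter.  Written as
   z0 + sum_j clamp01(l t - j) * d_j. *)
Definition pl_path (step : gen * bool -> cplx) (w : kword) (z0 : cplx)
    (t : R) : cplx :=
  (z0.1 + \sum_(j < size w)
            clamp01 ((size w)%:R * t - j%:R) * (step (nth (gx1, true) w j)).1,
   z0.2 + \sum_(j < size w)
            clamp01 ((size w)%:R * t - j%:R) * (step (nth (gx1, true) w j)).2).

Definition gamma_x (w : kword) (px : gauss) : R -> cplx := pl_path step_x w (hat_x px).
Definition gamma_y (w : kword) (py : gauss) : R -> cplx := pl_path step_y w (hat_y py).

Definition loop_xy (w : kword) (px py : gauss) (t : R) : cplx * cplx :=
  (gamma_x w px t, gamma_y w py t).

Definition conf2_punct : set (cplx * cplx) :=
  [set z | z.1 != (0, 0) /\ z.2 != (0, 0) /\ z.1 != z.2].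

Definition I01 : set R := [set t | 0 <= t <= 1].

(* A loop gamma based at b in the subspace X represents the trivial element
   of pi_1(X, b): there is a based homotopy in X from gamma to the
   constant loop. *)
Definition trivial_in_pi1 (X : set (cplx * cplx)) (b : cplx * cplx)
    (gamma : R -> cplx * cplx) : Prop :=
  exists H : R * R -> cplx * cplx,
    [/\ {within I01 `*` I01, continuous H},
        (forall s t, I01 s -> I01 t -> X (H (s, t))),
        (forall s, I01 s -> H (s, 0) = gamma s /\ H (s, 1) = b) &
        (forall t, I01 t -> H (0, t) = b /\ H (1, t) = b)].

Definition I_trivial (w : kword) (px py : gauss) : Prop :=
  trivial_in_pi1 conf2_punct (hat_x px, hat_y py) (loop_xy w px py).

End Loop.

(* Main.v *)
Require Import Defs.
From HB Require Import structures.
From mathcomp Require Import all_boot all_order all_algebra.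
From mathcomp Require Import all_classical all_reals all_analysis.
From mathcomp Require Import ring lra zify.
Set Implicit Arguments. Unset Strict Implicit. Unset Printing Implicit Defensive.
Import Order.TTheory GRing.Theory Num.Theory.
Import numFieldTopology.Exports numFieldNormedType.Exports.
Local Open Scope ring_scope.
Local Open Scope classical_set_scope.

Definition finv (l : fletter) : fletter := (l.1, ~~ l.2).

Lemma fpush_cases l s : (s = finv l :: fpush l s) \/ (fpush l s = l :: s).
Proof.
case: s => [|l' s'] /=; first by right.
case: ifP => [/andP [/eqP e1 /eqP e2] | _]; last by right.
left; rewrite /finv -e1 -e2; by case: l' {e1 e2}.
Qed.

Lemma size_fpush1 l s : (size s <= (size (fpush l s)).+1)%N.
Proof. case: (fpush_cases l s) => e; first (move: e; set t := fpush l s => e; rewrite e /=);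
 rewrite ?e /=; lia. Qed.

Lemma size_fpush2 l s : (size (fpush l s) <= (size s).+1)%N.
Proof. case: (fpush_cases l s) => e; first (move: e; set t := fpush l s => e; rewrite e /=);
 rewrite ?e /=; lia. Qed.

Lemma size_foldr_fpush a s : (size s <= size (foldr fpush s a) + size a)%N.
Proof.
elim: a => [|l a IH] /=; first by rewrite addn0.
apply: (leq_trans IH); rewrite addnS -addSn leq_add2r; exact: size_fpush1.
Qed.

Lemma size_freduce u : (size (freduce u) <= size u)%N.
Proof.
elim: u => [|l u IH] //=.
apply: (leq_trans (size_fpush2 _ _)); by rewrite ltnS.
Qed.

Lemma freduce_cat a b : freduce (a ++ b) = foldr fpush (freduce b) a.
Proof. by rewrite /freduce foldr_cat. Qed.

Definition cw (comp : gen * bool -> seq fletter) (u : kword) := flatten (map comp u).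
Definition Vs comp (w : kword) k := freduce (cw comp (drop k w)).
Definition small (comp : gen * bool -> seq fletter) := forall g, (size (comp g) <= 1)%N.

Lemma size_cw comp u : small comp -> (size (cw comp u) <= size u)%N.
Proof.
move=> sm; elim: u => [|g u IH] //=.
rewrite /cw /= size_cat -/(cw comp u) -addn1 addnC leq_add //.
Qed.

Lemma Vs_step comp w k : (k < size w)%N ->
  Vs comp w k = foldr fpush (Vs comp w k.+1) (comp (nth (gx1, true) w k)).
Proof.
move=> hk; rewrite /Vs (drop_nth (gx1, true) hk) /cw /= freduce_cat //.
Qed.

Lemma Vs_cases comp w k : small comp -> (k < size w)%N ->
  [\/ comp (nth (gx1,true) w k) = [::] /\ Vs comp w k = Vs comp w k.+1,
      exists l, comp (nth (gx1,true) w k) = [:: l] /\ Vs comp w k.+1 = finv l :: Vs comp w k |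
      exists l, comp (nth (gx1,true) w k) = [:: l] /\ Vs comp w k = l :: Vs comp w k.+1].
Proof.
move=> sm hk; have := Vs_step comp hk; have := sm (nth (gx1, true) w k).
case: (comp _) => [|l [|l' r]] //= _ ->.
  by constructor 1.
case: (fpush_cases l (Vs comp w k.+1)) => [e|e].
  by constructor 2; exists l.
by constructor 3; exists l.
Qed.

Lemma Vs_size_suffix comp w k : small comp -> (size (Vs comp w k) <= size w - k)%N.
Proof.
move=> sm; rewrite /Vs; apply: (leq_trans (size_freduce _)).
by rewrite -size_drop size_cw.
Qed.

Lemma Vs_size_prefix comp w k : small comp -> freduce (cw comp w) = [::] ->
  (size (Vs comp w k) <= k)%N.
Proof.
move=> sm h0.
have e : cw comp w = cw comp (take k w) ++ cw comp (drop k w).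
  by rewrite /cw -flatten_cat -map_cat cat_take_drop.
move: h0; rewrite e freduce_cat => h0.
have := size_foldr_fpush (cw comp (take k w)) (Vs comp w k).
rewrite /Vs h0 /= add0n => h; apply: (leq_trans h).
apply: (leq_trans (size_cw _ sm)); rewrite size_take; case: ifP => // /negbT.
by rewrite -leqNgt.
Qed.

Lemma Vs_end comp w : Vs comp w (size w) = [::].
Proof. by rewrite /Vs drop_size. Qed.

Lemma Vs_0 comp w : freduce (cw comp w) = [::] -> Vs comp w 0 = [::].
Proof. by rewrite /Vs drop0. Qed.
Section Real.
Variable R : realType.
Implicit Types f g : R * R -> R.

Lemma cD f g : continuous f -> continuous g -> continuous (fun z => f z + g z).
Proof. move=> cf cg z. apply: cvgD. exact: cf. exact: cg. Qed.
Lemma cM f g : continuous f -> continuous g -> continuous (fun z => f z * g z).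
Proof. move=> cf cg z. apply: cvgM. exact: cf. exact: cg. Qed.
Lemma cN f : continuous f -> continuous (fun z => - f z).
Proof. move=> cf z. apply: cvgN. exact: cf. Qed.
Lemma cB f g : continuous f -> continuous g -> continuous (fun z => f z - g z).
Proof. move=> cf cg; apply: cD => //; exact: cN. Qed.
Lemma fst_cont : continuous (fun z : R * R => z.1).
Proof. move=> z; exact: cvg_fst. Qed.
Lemma snd_cont : continuous (fun z : R * R => z.2).
Proof. move=> z; exact: cvg_snd. Qed.
Lemma cC (c : R) : continuous (fun z : R * R => c).
Proof. move=> z; exact: cvg_cst. Qed.
Lemma cmin f g : continuous f -> continuous g -> continuous (fun z => Num.min (f z) (g z)).
Proof. move=> cf cg z. have := (@continuous_min _ _ f g z (cf z) (cg z)). done. Qed.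
Lemma cmax f g : continuous f -> continuous g -> continuous (fun z => Num.max (f z) (g z)).
Proof. move=> cf cg z. have := (@continuous_max _ _ f g z (cf z) (cg z)). done. Qed.
Lemma cpair f g : continuous f -> continuous g -> continuous (fun z => (f z, g z)).
Proof. move=> cf cg z; exact: (cvg_pair (cf z) (cg z)). Qed.
Lemma cclamp f : continuous f -> continuous (fun z => clamp01 (f z)).
Proof. move=> cf; apply: cmin; first exact: cC. apply: cmax => //; exact: cC. Qed.
Lemma csum (n : nat) (F : nat -> R * R -> R) : (forall k, continuous (F k)) ->
  continuous (fun z => \sum_(k < n) F k z).
Proof.
move=> cF; elim: n => [|n IH].
  have -> : (fun z => \sum_(k < 0) F k z) = (fun z => 0) by apply: funext => z; rewrite big_ord0.
  exact: cC.
have -> : (fun z => \sum_(k < n.+1) F k z) = (fun z => \sum_(k < n) F k z + F n z).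
  by apply: funext => z; rewrite big_ord_recr.
exact: cD.
Qed.

Definition vc (j : nat) (l : fletter) : R := if l.1 == j then sgn R l.2 else 0.
Fixpoint vsum j (v : seq fletter) : R :=
  match v with [::] => 0 | a :: v' => vsum j v' + vc j a end.
Fixpoint Q j (v : seq fletter) (m : R) : R :=
  match v with [::] => 0 | a :: v' => Q j v' m + clamp01 (m - (size v')%:R) * vc j a end.

Lemma clampE (x : R) : [\/ x <= 0 /\ clamp01 x = 0, 0 <= x <= 1 /\ clamp01 x = x |
  1 <= x /\ clamp01 x = 1].
Proof.
rewrite /clamp01 maxEle. case: (leP 0 x) => h1; rewrite minEle.
  case: (leP 1 x) => h2.
    by constructor 3; split; lra.
  by constructor 2; split; lra.
case: (leP 1 0) => h2; first lra.
by constructor 1; split; lra.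
Qed.

Lemma clamp_ge0 (x : R) : 0 <= clamp01 x. Proof. case: (clampE x) => [][]; lra. Qed.
Lemma clamp_le1 (x : R) : clamp01 x <= 1. Proof. case: (clampE x) => [][]; lra. Qed.

Lemma clamp_id (x : R) : 0 <= x <= 1 -> clamp01 x = x.
Proof. by move=> h; case: (clampE x) => [][] ? ->; lra. Qed.

Lemma vc_bound j l : -1 <= vc j l <= 1.
Proof. rewrite /vc; case: (_ == _); last lra. case: l.2 => /=; lra. Qed.

Lemma vc_inv j l : vc j (finv l) = - vc j l.
Proof. rewrite /vc /finv /=; case: (_ == _); last by rewrite oppr0. by case: l.2 => /=; rewrite ?opprK. Qed.

Lemma vsum_bound j v : - (size v)%:R <= vsum j v <= (size v)%:R.
Proof.
elim: v => [|a v IH] /=; first lra.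
have := vc_bound j a; rewrite -addn1 natrD; lra.
Qed.

Lemma Q_le0 j v m : m <= 0 -> Q j v m = 0.
Proof.
move=> hm; elim: v => [|a v IH] //=; rewrite IH.
have : m - (size v)%:R <= 0 by have : 0 <= (size v)%:R :> R by []; lra.
move=> h; suff -> : clamp01 (m - (size v)%:R) = 0 by rewrite mul0r addr0.
by case: (clampE (m - (size v)%:R)) => [][] ? ->; lra.
Qed.

Lemma Q_low j a v m : m <= (size v)%:R -> Q j (a :: v) m = Q j v m.
Proof.
move=> hm /=; have : m - (size v)%:R <= 0 by lra.
move=> h; suff -> : clamp01 (m - (size v)%:R) = 0 by rewrite mul0r addr0.
by case: (clampE (m - (size v)%:R)) => [][] ? ->; lra.
Qed.

Lemma Q_full j v m : (size v)%:R <= m -> Q j v m = vsum j v.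
Proof.
elim: v => [|a v IH] //= hm.
rewrite -addn1 natrD in hm; rewrite IH; last lra.
have : 1 <= m - (size v)%:R by lra.
move=> h; suff -> : clamp01 (m - (size v)%:R) = 1 by rewrite mul1r.
by case: (clampE (m - (size v)%:R)) => [][] ? ->; lra.
Qed.

Lemma Q_cons j a v th : 0 <= th <= 1 ->
  Q j (a :: v) ((size v)%:R + th) = vsum j v + th * vc j a.
Proof.
move=> hth /=; rewrite Q_full; last lra.
have -> : (size v)%:R + th - (size v)%:R = th by ring.
suff -> : clamp01 th = th by [].
by case: (clampE th) => [][] ? ->; lra.
Qed.

Lemma Q_fullS j a v : Q j (a :: v) ((size v)%:R + 1) = vsum j v + vc j a.
Proof. by rewrite Q_full //= -addn1 natrD. Qed.

Lemma Q_bound j v m : 0 <= m -> - m <= Q j v m <= m.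
Proof.
move=> hm; elim: v => [|a v IH] /=; first lra.
have [hl|hl] := leP m (size v)%:R.
  have := Q_low j a hl => /= ->; exact: IH.
rewrite Q_full; last lra.
have := vsum_bound j v; have := vc_bound j a.
have : clamp01 (m - (size v)%:R) <= m - (size v)%:R /\ 0 <= clamp01 (m - (size v)%:R).
  by case: (clampE (m - (size v)%:R)) => [][] ? ->; lra.
set c := clamp01 _; set n := (size v)%:R; set x := vc j a; set y := vsum j v.
move=> [h1 h2] h3 h4; nra.
Qed.

Definition isint (x : R) := exists z : int, x = z%:~R.

Lemma isintD x y : isint x -> isint y -> isint (x + y).
Proof. by move=> [a ->] [b ->]; exists (a + b); rewrite intrD. Qed.

Lemma vc_int j l : isint (vc j l).
Proof.
rewrite /vc; case: (_ == _); last by exists 0.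
by case: l.2; [exists 1 | exists (-1)].
Qed.

Lemma vsum_int j v : isint (vsum j v).
Proof. elim: v => [|a v IH] /=; [by exists 0 | exact: isintD (vc_int _ _)]. Qed.

Lemma Q_int v m : isint (Q 1 v m) \/ isint (Q 2 v m).
Proof.
elim: v => [|a v IH]; first by left; exists 0.
have [hl|hl] := leP m (size v)%:R.
  by rewrite !Q_low.
rewrite /= !Q_full; try lra.
case: (boolP (a.1 == 1%N)) => h.
  right; rewrite /vc (eqP h) /= mulr0 addr0; exact: vsum_int.
left; rewrite /vc (negbTE h) /= mulr0 addr0; exact: vsum_int.
Qed.

Lemma Q_cont j v f : continuous f -> continuous (fun z => Q j v (f z)).
Proof.
move=> cf; elim: v => [|a v IH] /=; first exact: cC.
apply: cD => //; apply: cM; last exact: cC.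
apply: cclamp; apply: cB => //; exact: cC.
Qed.

End Real.
Arguments vsum {R}.
Arguments vc {R}.
Arguments isint {R}.
Section Comp.
Variable R : realType.
Variable comp : gen * bool -> seq fletter.
Variable w : kword.

Definition hg k : R := (size (Vs comp w k))%:R.
Definition Wd k := if (size (Vs comp w k) <= size (Vs comp w k.+1))%N
  then Vs comp w k.+1 else Vs comp w k.
Definition Phi j k (th lam : R) := Q j (Wd k) (lam * (hg k + th * (hg k.+1 - hg k))).
Definition Psi j k (lam : R) := Q j (Vs comp w k) (lam * hg k).
Definition Gc (z0j sig : R) j (s t : R) :=
  z0j - sig * \sum_(k < size w)
     (Phi j k (clamp01 ((size w)%:R * s - k%:R)) (1 - t) - Psi j k (1 - t)).

Lemma natS (m : nat) : (m.+1)%:R = (m%:R + 1 : R).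
Proof. by rewrite -addn1 natrD. Qed.

Lemma F1 j k lam : small comp -> (k < size w)%N -> 0 <= lam <= 1 ->
  Phi j k 0 lam = Psi j k lam.
Proof.
move=> sm hk hl; rewrite /Phi /Psi /Wd /hg mul0r addr0.
case: (Vs_cases sm hk) => [[_ e]|[l [_ e]]|[l [_ e]]]; rewrite e /=.
- by rewrite leqnn.
- rewrite leqnSn Q_low //. have : 0 <= (size (Vs comp w k))%:R :> R by []. nra.
- by rewrite ltnn.
Qed.

Lemma F2 j k lam : small comp -> (k < size w)%N -> 0 <= lam <= 1 ->
  Phi j k 1 lam = Psi j k.+1 lam.
Proof.
move=> sm hk hl; rewrite /Phi /Psi /Wd /hg mul1r.
case: (Vs_cases sm hk) => [[_ e]|[l [_ e]]|[l [_ e]]]; rewrite e /=.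
- by rewrite leqnn subrr addr0.
- by rewrite leqnSn addrC subrK.
- rewrite ltnn addrC subrK Q_low //. have : 0 <= (size (Vs comp w k.+1))%:R :> R by []. nra.
Qed.

Lemma F3 j k th : small comp -> (k < size w)%N -> 0 <= th <= 1 ->
  Phi j k th 1 - Psi j k 1 = - th * vsum j (comp (nth (gx1, true) w k)).
Proof.
move=> sm hk hth; rewrite /Phi /Psi /Wd /hg !mul1r.
case: (Vs_cases sm hk) => [[c e]|[l [c e]]|[l [c e]]]; rewrite c e /=.
- by rewrite leqnn subrr mulr0 addr0 subrr mulr0.
- rewrite leqnSn natS.
  have -> : (size (Vs comp w k))%:R + th * ((size (Vs comp w k))%:R + 1 - (size (Vs comp w k))%:R)
    = (size (Vs comp w k))%:R + th by ring.
  rewrite Q_cons // Q_full // vc_inv; ring.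
- rewrite ltnn natS.
  have -> : (size (Vs comp w k.+1))%:R + 1 + th * ((size (Vs comp w k.+1))%:R - ((size (Vs comp w k.+1))%:R + 1))
    = (size (Vs comp w k.+1))%:R + (1 - th) by ring.
  rewrite Q_cons; last lra.
  rewrite Q_full; last lra.
  set s := (size _)%:R; have -> : s + 1 - s = 1 by ring.
  rewrite clamp_id; [ring | lra].
Qed.

Lemma Phi0 j k th : Phi j k th 0 = 0.
Proof. by rewrite /Phi mul0r Q_le0. Qed.
Lemma Psi0 j k : Psi j k 0 = 0.
Proof. by rewrite /Psi mul0r Q_le0. Qed.

Lemma Psi_first j lam : freduce (cw comp w) = [::] -> Psi j 0 lam = 0.
Proof. by move=> tr; rewrite /Psi Vs_0. Qed.
Lemma Psi_last j lam : Psi j (size w) lam = 0.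
Proof. by rewrite /Psi Vs_end. Qed.

End Comp.
Arguments hg {R}.

Section Telesc.
Variable R : realType.

Lemma telescA (N : nat) (f : nat -> R -> R) (p : nat -> R) (x : R) (k0 : nat) :
  (k0 < N)%N -> k0%:R <= x ->
  (forall k, (k < N)%N -> f k 1 = p k.+1) ->
  forall n, (n <= k0)%N -> \sum_(k < n) (f k (clamp01 (x - k%:R)) - p k) = p n - p 0%N.
Proof.
move=> hk0 hx f1; elim => [|n IH] hn; first by rewrite big_ord0 subrr.
rewrite big_ord_recr /= IH; last by apply: ltnW.
have : 1 <= x - n%:R.
  have : (n.+1)%:R <= k0%:R :> R by rewrite ler_nat.
  rewrite natS; lra.
move=> h1; have -> : clamp01 (x - n%:R) = 1 by case: (clampE (x - n%:R)) => [][] ? ->; lra.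
rewrite f1; last by apply: (leq_trans hn); apply: ltnW.
ring.
Qed.

Lemma telesc (N : nat) (f : nat -> R -> R) (p : nat -> R) (x : R) (k0 : nat) :
  (k0 < N)%N -> k0%:R <= x <= k0.+1%:R ->
  (forall k, (k < N)%N -> f k 0 = p k) -> (forall k, (k < N)%N -> f k 1 = p k.+1) ->
  \sum_(k < N) (f k (clamp01 (x - k%:R)) - p k) = f k0 (x - k0%:R) - p 0%N.
Proof.
move=> hk0 hx f0 f1.
have B : forall m, (k0.+1 + m <= N)%N ->
    \sum_(k < k0.+1 + m) (f k (clamp01 (x - k%:R)) - p k) = f k0 (x - k0%:R) - p 0%N.
  elim => [|m IH] hm.
    rewrite addn0 big_ord_recr /= (telescA hk0 _ f1 (leqnn k0)); last lra.
    have -> : clamp01 (x - k0%:R) = x - k0%:R.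
      by move: hx; rewrite natS => hx; case: (clampE (x - k0%:R)) => [][] ? ->; lra.
    ring.
  rewrite addnS big_ord_recr /= IH; last lia.
  have : x - (k0.+1 + m)%:R <= 0.
    rewrite natrD; have : 0 <= m%:R :> R by []. lra.
  move=> h; have -> : clamp01 (x - (k0.+1 + m)%:R) = 0.
    by case: (clampE (x - (k0.+1 + m)%:R)) => [][] ? ->; lra.
  rewrite f0; [by rewrite subrr addr0 | lia].
have := B (N - k0.+1)%N; rewrite subnKC //; apply; by rewrite leqnn.
Qed.

Lemma exists_seg (x : R) (n : nat) : 0 <= x <= (n.+1)%:R ->
  exists k, (k <= n)%N /\ k%:R <= x <= (k.+1)%:R.
Proof.
elim: n => [|n IH] hx; first by exists 0%N; split => //; lra.
have [h|h] := leP x (n.+1)%:R.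
  have [k [hk hk']] : exists k, (k <= n)%N /\ k%:R <= x <= (k.+1)%:R by apply: IH; lra.
  by exists k; split => //; apply: (leq_trans hk).
exists n.+1; split => //; lra.
Qed.

End Telesc.
Section GcProps.
Variable R : realType.
Variables (comp : gen * bool -> seq fletter) (w : kword).
Hypothesis sm : small comp.
Hypothesis tr : freduce (cw comp w) = [::].

Lemma G_t0 (z0 sig : R) j s : Gc comp w z0 sig j s 0 =
  z0 + \sum_(k < size w) clamp01 ((size w)%:R * s - k%:R) * (sig * vsum j (comp (nth (gx1,true) w k))).
Proof.
rewrite /Gc subr0.
rewrite (eq_bigr (fun k : 'I_(size w) => - (clamp01 ((size w)%:R * s - k%:R) * vsum j (comp (nth (gx1,true) w k))))); last first.
  move=> k _; rewrite F3 //; first ring.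
  apply/andP; split; [exact: clamp_ge0 | exact: clamp_le1].
rewrite sumrN mulrN opprK mulr_sumr; congr (_ + _); apply: eq_bigr => k _; ring.
Qed.

Lemma G_t1 (z0 sig : R) j s : Gc comp w z0 sig j s 1 = z0.
Proof.
rewrite /Gc subrr big1 ?mulr0 ?subr0 // => k _.
by rewrite Phi0 Psi0 subrr.
Qed.

Lemma G_s0 (z0 sig : R) j t : 0 <= t <= 1 -> Gc comp w z0 sig j 0 t = z0.
Proof.
move=> ht; rewrite /Gc big1 ?mulr0 ?subr0 // => k _.
rewrite sub0r.
have -> : clamp01 (- (k%:R : R)) = 0.
  have : 0 <= (k%:R : R) by []. by case: (clampE (- (k%:R : R))) => [][] ? ->; lra.
rewrite F1 ?subrr //; lra.
Qed.

Lemma G_repr (s t : R) : 0 <= s <= 1 -> 0 <= t <= 1 ->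
  exists W m, [/\ 0 <= m, 2 * m <= (size w)%:R &
    forall (z0 sig : R) j, Gc comp w z0 sig j s t = z0 - sig * Q j W m].
Proof.
move=> hs ht.
case E: (size w) => [|n'].
  exists [::], 0; split => //; first lra.
  by move=> z0 sig j; rewrite /Gc E big_ord0 /= mulr0.
have hx : 0 <= (size w)%:R * s <= (n'.+1)%:R.
  rewrite E; have : 0 <= (n'.+1)%:R :> R by []. nra.
have [k0 [hk0 hseg]] := exists_seg hx.
have hk0' : (k0 < size w)%N by rewrite E ltnS.
set th := (size w)%:R * s - k0%:R.
have hth : 0 <= th <= 1 by rewrite /th; move: hseg; rewrite natS; lra.
exists (Wd comp w k0), ((1 - t) * (hg (R:=R) comp w k0 + th * (hg (R:=R) comp w k0.+1 - hg (R:=R) comp w k0))).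
have hh1 := Vs_size_prefix k0 sm tr.
have hh2 := Vs_size_suffix w k0 sm.
have hh3 := Vs_size_prefix k0.+1 sm tr.
have hh4 := Vs_size_suffix w k0.+1 sm.
have r1 : hg (R:=R) comp w k0 <= k0%:R by rewrite /hg ler_nat.
have r2 : hg (R:=R) comp w k0 + k0%:R <= (size w)%:R by rewrite /hg -natrD ler_nat; lia.
have r3 : hg (R:=R) comp w k0.+1 <= k0.+1%:R by rewrite /hg ler_nat.
have r4 : hg (R:=R) comp w k0.+1 + k0.+1%:R <= (size w)%:R by rewrite /hg -natrD ler_nat; lia.
have r7 := natS R k0.
have r5 : 0 <= hg (R:=R) comp w k0 by rewrite /hg.
have r6 : 0 <= hg (R:=R) comp w k0.+1 by rewrite /hg.
set h0 := hg (R:=R) comp w k0 in r1 r2 r5 *.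
set h1 := hg (R:=R) comp w k0.+1 in r3 r4 r6 *.
have e1 : 0 <= (1 - th) * h0 by apply: mulr_ge0; lra.
have e2 : 0 <= th * h1 by apply: mulr_ge0; lra.
have e3 : 0 <= (1 - th) * (k0%:R - h0) by apply: mulr_ge0; lra.
have e4 : 0 <= th * (k0.+1%:R - h1) by apply: mulr_ge0; lra.
have e5 : 0 <= (1 - th) * ((size w)%:R - k0%:R - h0) by apply: mulr_ge0; lra.
have e6 : 0 <= th * ((size w)%:R - k0.+1%:R - h1) by apply: mulr_ge0; lra.
have hH0 : 0 <= h0 + th * (h1 - h0) by lra.
have hH1 : 2 * (h0 + th * (h1 - h0)) <= (size w)%:R.
  have : th = (size w)%:R * s - k0%:R by [].
  move: hseg; rewrite r7; lra.
have e7 : 0 <= (1 - t) * (h0 + th * (h1 - h0)) by apply: mulr_ge0; lra.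
have e8 : 0 <= t * (h0 + th * (h1 - h0)) by apply: mulr_ge0; lra.
set H := h0 + th * (h1 - h0) in hH0 hH1 e7 e8 *.
have -> : 2 * ((1 - t) * H) = 2 * H - 2 * (t * H) by ring.
split.
- lra.
- rewrite -E; lra.
move=> z0 sig j; rewrite /Gc.
have := telesc (f := fun k th => Phi comp w j k th (1 - t)) (p := fun k => Psi comp w j k (1 - t))
  (x := (size w)%:R * s) hk0' hseg.
rewrite /= => ->.
- by rewrite Psi_first // subr0.
- move=> k hk; apply: F1 => //; lra.
- move=> k hk; apply: F2 => //; lra.
Qed.

Lemma G_cont (z0 sig : R) j : continuous (fun z : R * R => Gc comp w z0 sig j z.1 z.2).
Proof.
rewrite /Gc; apply: cB; first exact: cC.
apply: cM; first exact: cC.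
apply: (csum (F := fun k (z : R * R) => Phi comp w j k (clamp01 ((size w)%:R * z.1 - k%:R)) (1 - z.2)
   - Psi comp w j k (1 - z.2))) => k.
rewrite /Phi /Psi; apply: cB; apply: Q_cont; apply: cM.
- apply: cB; [exact: cC | exact: snd_cont].
- apply: cD; first exact: cC. apply: cM; last exact: cC.
  apply: cclamp; apply: cB; last exact: cC. apply: cM; [exact: cC | exact: fst_cont].
- apply: cB; [exact: cC | exact: snd_cont].
- exact: cC.
Qed.

End GcProps.
Section Final.
Variable R : realType.

Lemma cpairG {U V : topologicalType} (f : R * R -> U) (g : R * R -> V) :
  continuous f -> continuous g -> continuous (fun z => (f z, g z)).
Proof. move=> cf cg z; exact: (cvg_pair (cf z) (cg z)). Qed.

Lemma G_s1 comp w (z0 sig : R) j t : small comp -> freduce (cw comp w) = [::] ->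
  0 <= t <= 1 -> Gc comp w z0 sig j 1 t = z0.
Proof.
move=> sm tr ht; rewrite /Gc.
case E: (size w) => [|n']; first by rewrite big_ord0 mulr0 subr0.
have hk : (n' < size w)%N by rewrite E.
have hseg : ((n'%:R : R) <= (size w)%:R * 1) && ((size w)%:R * 1 <= (n'.+1%:R : R)).
  by rewrite E mulr1 lexx andbT ler_nat leqnSn.
have := telesc (f := fun k th => Phi comp w j k th (1 - t)) (p := fun k => Psi comp w j k (1 - t))
  (x := (size w)%:R * 1) hk hseg.
rewrite /= E => ->.
- have -> : n'.+1%:R * 1 - n'%:R = 1 :> R by rewrite mulr1 -addn1 natrD; ring.
  rewrite F2 ?E //; last by clear tr; lra.
  have := Psi_last comp w j (1 - t); rewrite E => ->.
  by rewrite Psi_first // subrr mulr0 subr0.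
- move=> k hk'; apply: F1 => //; [by rewrite E | clear tr; lra].
- move=> k hk'; apply: F2 => //; [by rewrite E | clear tr; lra].
Qed.

End Final.
Section Helpers.
Variable R : realType.

Lemma sm_a : small comp_a. Proof. by case => [[] b]. Qed.
Lemma sm_b : small comp_b. Proof. by case => [[] b]. Qed.
Lemma sm_c : small comp_c. Proof. by case => [[] b]. Qed.

Ltac letter := case => [[] []]; rewrite /step_x /step_y /comp_a /comp_b /comp_c /=; rewrite /vc /=; lra.

Lemma stx1 g : (step_x R g).1 = vsum 1 (comp_a g). Proof. move: g; letter. Qed.
Lemma stx2 g : (step_x R g).2 = vsum 2 (comp_a g). Proof. move: g; letter. Qed.
Lemma sty1 g : (step_y R g).1 = - vsum 1 (comp_b g). Proof. move: g; letter. Qed.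
Lemma sty2 g : (step_y R g).2 = - vsum 2 (comp_b g). Proof. move: g; letter. Qed.
Lemma stxA1 g : (step_x R g).1 = - vsum 1 (comp_c g) - vsum 1 (comp_b g). Proof. move: g; letter. Qed.
Lemma stxA2 g : (step_x R g).2 = - vsum 2 (comp_c g) - vsum 2 (comp_b g). Proof. move: g; letter. Qed.
Lemma styB1 g : (step_y R g).1 = vsum 1 (comp_a g) + vsum 1 (comp_c g). Proof. move: g; letter. Qed.
Lemma styB2 g : (step_y R g).2 = vsum 2 (comp_a g) + vsum 2 (comp_c g). Proof. move: g; letter. Qed.

Lemma isintN (a : R) : isint a -> isint (- a).
Proof. by move=> [z ->]; exists (- z); rewrite intrN. Qed.
Lemma isintZ (z : int) : isint (z%:~R : R).
Proof. by exists z. Qed.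

Lemma three_ne0 : (3 : R) != 0. Proof. by rewrite pnatr_eq0. Qed.

Lemma intc_ne0 (z c : int) : (c == 1) || (c == 2) -> z%:~R * 3 + c%:~R != 0 :> R.
Proof.
move=> hc; have -> : z%:~R * 3 + c%:~R = (z * 3 + c)%:~R :> R.
  by rewrite intrD intrM -pmulrn.
rewrite intr_eq0; apply/eqP; lia.
Qed.

Lemma L1 (a : R) : isint a -> a + 3^-1 != 0.
Proof.
move=> [z ->]; apply/eqP => h; have := intc_ne0 z (c := 1) isT.
have -> : z%:~R * 3 + 1%:~R = (z%:~R + 3^-1) * 3 :> R.
  by rewrite mulrDl mulVf ?three_ne0.
by rewrite h mul0r eqxx.
Qed.

Lemma L3 (a : R) : isint a -> a - 3^-1 != 0.
Proof.
move=> [z ->]; apply/eqP => h; have := intc_ne0 (z - 1) (c := 2) isT.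
have -> : (z - 1)%:~R * 3 + 2%:~R = (z%:~R - 3^-1) * 3 :> R.
  rewrite mulrBl mulVf ?three_ne0 // intrB. rewrite -[2%:~R]pmulrn -[1%:~R]pmulrn. ring.
by rewrite h mul0r eqxx.
Qed.

Lemma L2 (a : R) : isint a -> a - 2 * 3^-1 != 0.
Proof.
move=> [z ->]; apply/eqP => h; have := intc_ne0 (z - 1) (c := 1) isT.
have -> : (z - 1)%:~R * 3 + 1%:~R = (z%:~R - 2 * 3^-1) * 3 :> R.
  rewrite mulrBl -mulrA mulVf ?three_ne0 // intrB. rewrite -[1%:~R]pmulrn. ring.
by rewrite h mul0r eqxx.
Qed.

Lemma big_coord (l : nat) (z : int) : (l < `|z|)%N ->
  (l%:R + 1 <= z%:~R :> R) \/ (z%:~R <= - (l%:R + 1) :> R).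
Proof.
move=> h; have [h1|h1] : (l.+1%:Z <= z)%R \/ (z <= - (l.+1%:Z))%R by lia.
  left; have : (l.+1%:Z)%:~R <= z%:~R :> R by rewrite ler_int.
  by rewrite -pmulrn -addn1 natrD.
right; have : z%:~R <= (- l.+1%:Z)%:~R :> R by rewrite ler_int.
by rewrite intrN -pmulrn -addn1 natrD.
Qed.

Lemma pair_ne0 (a b : R) : (a != 0) || (b != 0) -> (a, b) != (0, 0).
Proof. by rewrite xpair_eqE negb_and. Qed.

End Helpers.
Section Main.
Variable R : realType.

Lemma caseA (w : kword) (px py : gauss) :
  inT w -> (size w < gauss_norm px)%N -> I_trivial R w px py.
Proof.
move=> [ta tb tc] hn.
have ta' : freduce (cw comp_a w) = [::] := ta.
have tb' : freduce (cw comp_b w) = [::] := tb.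
have tc' : freduce (cw comp_c w) = [::] := tc.
pose y0 := hat_y R py. pose x0 := hat_x R px.
pose Gy1 (z : R * R) := Gc comp_b w y0.1 (-1) 1 z.1 z.2.
pose Gy2 (z : R * R) := Gc comp_b w y0.2 (-1) 2 z.1 z.2.
pose Gd1 (z : R * R) := Gc comp_c w (x0.1 - y0.1) (-1) 1 z.1 z.2.
pose Gd2 (z : R * R) := Gc comp_c w (x0.2 - y0.2) (-1) 2 z.1 z.2.
exists (fun z => ((Gd1 z + Gy1 z, Gd2 z + Gy2 z), (Gy1 z, Gy2 z))).
split.
- apply: continuous_subspaceT; rewrite /Gy1 /Gy2 /Gd1 /Gd2.
  apply: cpairG.
    apply: cpairG; apply: cD; exact: (@G_cont R _ w _ _ _).
  apply: cpairG; exact: (@G_cont R _ w _ _ _).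
- move=> s t hs ht.
  have [Wy [my [my0 my1 Ey]]] := G_repr sm_b tb' hs ht.
  have [Wd [md [md0 md1 Ed]]] := G_repr sm_c tc' hs ht.
  rewrite /conf2_punct /Gy1 /Gy2 /Gd1 /Gd2 /= !Ey !Ed; clear ta tb tc ta' tb' tc'.
  have bd1 := Q_bound 1 Wd md0; have bd2 := Q_bound 2 Wd md0.
  have by1 := Q_bound 1 Wy my0; have by2 := Q_bound 2 Wy my0.
  rewrite /x0 /y0 /hat_x /hat_y /=.
  split; [|split].
  + apply: pair_ne0.
    move: hn; rewrite /gauss_norm ltnNge geq_max negb_and -!ltnNge => /orP [] hc.
    * have := big_coord R hc => hb; apply/orP; left; apply/eqP => h.
      case: hb => hb; lra.
    * have := big_coord R hc => hb; apply/orP; right; apply/eqP => h.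
      case: hb => hb; lra.
  + apply: pair_ne0; case: (Q_int Wy my) => [[q ->]|[q ->]]; apply/orP; [left|right].
    * have -> : py.1%:~R + 3^-1 - -1 * q%:~R = (py.1%:~R + q%:~R) + 3^-1 :> R by ring.
      apply: L1; apply: isintD; exact: isintZ.
    * have -> : py.2%:~R + 3^-1 - -1 * q%:~R = (py.2%:~R + q%:~R) + 3^-1 :> R by ring.
      apply: L1; apply: isintD; exact: isintZ.
  + apply/negP => /eqP [] e1 e2.
    case: (Q_int Wd md) => [[q hq]|[q hq]].
    * have : (px.1%:~R - py.1%:~R + q%:~R) - 2 * 3^-1 != 0 :> R.
        apply: L2; apply: isintD; [apply: isintD; [exact: isintZ| apply: isintN; exact: isintZ] | exact: isintZ].
      rewrite -hq; move/eqP; apply; lra.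
    * have : (px.2%:~R - py.2%:~R + q%:~R) - 2 * 3^-1 != 0 :> R.
        apply: L2; apply: isintD; [apply: isintD; [exact: isintZ| apply: isintN; exact: isintZ] | exact: isintZ].
      rewrite -hq; move/eqP; apply; lra.
- move=> s hs; split.
  + rewrite /loop_xy /gamma_x /gamma_y /pl_path /Gy1 /Gy2 /Gd1 /Gd2 /= !G_t0; try (exact: sm_b || exact: sm_c).
    congr (_, _); congr (_, _).
    * rewrite addrACA -big_split /=; congr (_ + _); first by rewrite subrK.
      apply: eq_bigr => k _; rewrite stxA1; ring.
    * rewrite addrACA -big_split /=; congr (_ + _); first by rewrite subrK.
      apply: eq_bigr => k _; rewrite stxA2; ring.
    * congr (_ + _); apply: eq_bigr => k _; rewrite sty1; ring.
    * congr (_ + _); apply: eq_bigr => k _; rewrite sty2; ring.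
  + rewrite /Gy1 /Gy2 /Gd1 /Gd2 /= !G_t1 !subrK.
    by [].
- move=> t ht; split; rewrite /Gy1 /Gy2 /Gd1 /Gd2 /=; [rewrite !G_s0 | rewrite !G_s1];
  try (exact: sm_b || exact: sm_c || exact: tb' || exact: tc' || exact: ht); by rewrite !subrK.
Qed.

End Main.
Section Main2.
Variable R : realType.

Lemma subsubK (a b : R) : a - (a - b) = b. Proof. ring. Qed.

Lemma caseB (w : kword) (px py : gauss) :
  inT w -> (size w < gauss_norm py)%N -> I_trivial R w px py.
Proof.
move=> [ta tb tc] hn.
have ta' : freduce (cw comp_a w) = [::] := ta.
have tc' : freduce (cw comp_c w) = [::] := tc.
pose y0 := hat_y R py. pose x0 := hat_x R px.
pose Gx1 (z : R * R) := Gc comp_a w x0.1 1 1 z.1 z.2.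
pose Gx2 (z : R * R) := Gc comp_a w x0.2 1 2 z.1 z.2.
pose Gd1 (z : R * R) := Gc comp_c w (x0.1 - y0.1) (-1) 1 z.1 z.2.
pose Gd2 (z : R * R) := Gc comp_c w (x0.2 - y0.2) (-1) 2 z.1 z.2.
exists (fun z => ((Gx1 z, Gx2 z), (Gx1 z - Gd1 z, Gx2 z - Gd2 z))).
split.
- apply: continuous_subspaceT; rewrite /Gx1 /Gx2 /Gd1 /Gd2.
  apply: cpairG.
    apply: cpairG; exact: (@G_cont R _ w _ _ _).
  apply: cpairG; apply: cB; exact: (@G_cont R _ w _ _ _).
- move=> s t hs ht.
  have [Wx [mx [mx0 mx1 Ex]]] := G_repr sm_a ta' hs ht.
  have [Wd [md [md0 md1 Ed]]] := G_repr sm_c tc' hs ht.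
  rewrite /conf2_punct /Gx1 /Gx2 /Gd1 /Gd2 /= !Ex !Ed; clear ta tb tc ta' tc'.
  have bd1 := Q_bound 1 Wd md0; have bd2 := Q_bound 2 Wd md0.
  have bx1 := Q_bound 1 Wx mx0; have bx2 := Q_bound 2 Wx mx0.
  rewrite /x0 /y0 /hat_x /hat_y /=.
  split; [|split].
  + apply: pair_ne0; case: (Q_int Wx mx) => [[q ->]|[q ->]]; apply/orP; [left|right].
    * have -> : px.1%:~R - 3^-1 - 1 * q%:~R = (px.1%:~R - q%:~R) - 3^-1 :> R by ring.
      apply: L3; apply: isintD; [exact: isintZ | apply: isintN; exact: isintZ].
    * have -> : px.2%:~R - 3^-1 - 1 * q%:~R = (px.2%:~R - q%:~R) - 3^-1 :> R by ring.
      apply: L3; apply: isintD; [exact: isintZ | apply: isintN; exact: isintZ].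
  + apply: pair_ne0.
    move: hn; rewrite /gauss_norm ltnNge geq_max negb_and -!ltnNge => /orP [] hc.
    * have := big_coord R hc => hb; apply/orP; left; apply/eqP => h.
      case: hb => hb; lra.
    * have := big_coord R hc => hb; apply/orP; right; apply/eqP => h.
      case: hb => hb; lra.
  + apply/negP => /eqP [] e1 e2.
    case: (Q_int Wd md) => [[q hq]|[q hq]].
    * have : (px.1%:~R - py.1%:~R + q%:~R) - 2 * 3^-1 != 0 :> R.
        apply: L2; apply: isintD; [apply: isintD; [exact: isintZ| apply: isintN; exact: isintZ] | exact: isintZ].
      rewrite -hq; move/eqP; apply; lra.
    * have : (px.2%:~R - py.2%:~R + q%:~R) - 2 * 3^-1 != 0 :> R.
        apply: L2; apply: isintD; [apply: isintD; [exact: isintZ| apply: isintN; exact: isintZ] | exact: isintZ].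
      rewrite -hq; move/eqP; apply; lra.
- move=> s hs; split.
  + rewrite /loop_xy /gamma_x /gamma_y /pl_path /Gx1 /Gx2 /Gd1 /Gd2 /= !G_t0;
      try (exact: sm_a || exact: sm_c).
    congr (_, _); congr (_, _).
    * congr (_ + _); apply: eq_bigr => k _; rewrite stx1; ring.
    * congr (_ + _); apply: eq_bigr => k _; rewrite stx2; ring.
    * rewrite opprD addrACA -sumrN -big_split /=; congr (_ + _); first by rewrite subsubK.
      apply: eq_bigr => k _; rewrite styB1; ring.
    * rewrite opprD addrACA -sumrN -big_split /=; congr (_ + _); first by rewrite subsubK.
      apply: eq_bigr => k _; rewrite styB2; ring.
  + rewrite /Gx1 /Gx2 /Gd1 /Gd2 /= !G_t1 !subsubK. by [].
- move=> t ht; split; rewrite /Gx1 /Gx2 /Gd1 /Gd2 /=; [rewrite !G_s0 | rewrite !G_s1];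
  try (exact: sm_a || exact: sm_c || exact: ta' || exact: tc' || exact: ht); by rewrite !subsubK.
Qed.

End Main2.

Theorem lemma4p10 (R : realType) (w : kword) (px py : gauss) :
  inT w -> (size w < maxn (gauss_norm px) (gauss_norm py))%N -> I_trivial R w px py.
Proof.
move=> hT; rewrite leq_max => /orP [] h.
  exact: caseA.
exact: caseB.
Qed.
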